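(* Let $X$ be a real reflexive Banach space, $T:X\rightrightarrows X^{\ast}$ maximally monotone, and $h\in\mathcal{H}(T)$. Then $\breve{T}_h$ is additive. Moreover, $\breve{T}_h$ is maximally additive if and only if $(\mathcal{A}h)^{\ast}\circ i=\mathcal{A}h$. Consequently, if $h^{\ast}\circ i=h$ then $\breve{T}_h$ is maximally additive.
   Context: $X^{\ast}$ is the dual of $X$ with pairing $\langle\cdot,\cdot\rangle$. The dual of $X\times X^{\ast}$ is identified with $X^{\ast}\times X$ via $\langle (x,x^{\ast}),(y^{\ast},y)\rangle=\langle x,y^{\ast}\rangle+\langle y,x^{\ast}\rangle$; for $g:X\times X^{\ast}\to\mathbb{R}\cup\{+\infty\}$, $g^{\ast}(y^{\ast},y)=\sup_{(x,x^{\ast})}\{\langle x,y^{\ast}\rangle+\langle y,x^{\ast}\rangle-g(x,x^{\ast})\}$, and $i(x,x^{\ast})=(x^{\ast},x)$. $\mathcal{H}(T)$ is the family of lower semicontinuous convex $h:X\times X^{\ast}\to\mathbb{R}\cup\{+\infty\}$ with $h(x,x^{\ast})\ge\langle x,x^{\ast}\rangle$ everywhere and equality whenever $x^{\ast}\in T(x)$. $\mathcal{A}h:=\tfrac12(h+h^{\ast}\circ i)$. For $\eta\ge0$, $\partial_\eta h(z)$ is the set of $(y^{\ast},y)\in X^{\ast}\times X$ with $h(w,w^{\ast})\ge h(z)+\langle (w,w^{\ast})-z,(y^{\ast},y)\rangle-\eta$ for all $(w,w^{\ast})$ when $h(z)<\infty$, and $\emptyset$ otherwise; $\breve{T}_h(\epsilon,x):=\{x^{\ast}:(x^{\ast},x)\in\partial_{2\epsilon}h(x,x^{\ast})\}$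 for $\epsilon\ge0$. For $g\in\mathcal{H}(T)$, $L^{g}(\epsilon,x)=\{x^{\ast}:g(x,x^{\ast})\le\langle x,x^{\ast}\rangle+\epsilon\}$; the family $\mathbb{E}(T)$ of enlargements of $T$ consists exactly of the maps $L^g$, $g\in\mathcal{H}(T)$ (each with a unique $g$). An enlargement $E$ is additive if $\langle x-y,x^{\ast}-y^{\ast}\rangle\ge-(\epsilon_1+\epsilon_2)$ whenever $x^{\ast}\in E(\epsilon_1,x)$, $y^{\ast}\in E(\epsilon_2,y)$. An additive $E\in\mathbb{E}(T)$ is maximally additive if whenever $E'\in\mathbb{E}(T)$ is additive and $E(\epsilon,x)\subset E'(\epsilon,x)$ for all $\epsilon\ge0$, $x\in X$, then $E=E'$. *)

(* Defs.v *)
From HB Require Import structures.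
From mathcomp Require Import all_boot all_order all_algebra.
From mathcomp Require Import all_classical all_reals all_analysis.
Set Implicit Arguments. Unset Strict Implicit. Unset Printing Implicit Defensive.
Import Order.TTheory GRing.Theory Num.Theory.
Import numFieldNormedType.Exports.
Local Open Scope classical_set_scope.
Local Open Scope ring_scope.

Section Defs.
Variables (R : realType) (X : normedModType R).

(* X^* is represented as the set of continuous linear functionals X -> R;
   an element x^* of X^* is a function f : X -> R with [is_dual f];
   the pairing <x, x^*> is f x. *)
Definition is_dual (f : X -> R) : Prop :=
  (forall (a : R) (u v : X), f (a *: u + v) = a * f u + f v) /\ continuous f.

Definition dnorm (f : X -> R) : R :=
  sup [set `|f x| | x in [set x : X | `|x| <= 1]].

Definition ddist (f g : X -> R) : R := dnorm (fun u => f u - g u).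

(* reflexivity: the canonical embedding X -> X^** is onto, where X^** is the
   space of bounded (= continuous) linear functionals on (X^*, dnorm) *)
Definition reflexive_space : Prop :=
  forall phi : (X -> R) -> R,
    (forall (a b : R) (f g : X -> R), is_dual f -> is_dual g ->
       phi (fun u => a * f u + b * g u) = a * phi f + b * phi g) ->
    (exists C : R, forall f, is_dual f -> `|phi f| <= C * dnorm f) ->
    exists x : X, forall f, is_dual f -> phi f = f x.

Definition is_operator (T : X -> set (X -> R)) : Prop :=
  forall x f, T x f -> is_dual f.

Definition monotone_op (T : X -> set (X -> R)) : Prop :=
  forall x y f g, T x f -> T y g -> 0 <= f (x - y) - g (x - y).

Definition max_monotone_op (T : X -> set (X -> R)) : Prop :=
  is_operator T /\ monotone_op T /\
  forall S : X -> set (X -> R), is_operator S -> monotone_op S ->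
    (forall x, T x `<=` S x) -> forall x, S x = T x.

(* functions X × X^* -> R ∪ {+oo} (only their values on X × X^* matter) *)
Definition lsc (h : X -> (X -> R) -> \bar R) : Prop :=
  forall x f, is_dual f -> forall a : R, (a%:E < h x f)%E ->
    exists2 d : R, 0 < d & forall y g, is_dual g ->
      `|y - x| + ddist g f < d -> (a%:E < h y g)%E.

Definition convex_fun (h : X -> (X -> R) -> \bar R) : Prop :=
  forall (x1 x2 : X) (f1 f2 : X -> R) (t : R), is_dual f1 -> is_dual f2 -> 0 < t -> t < 1 ->
    (h ((t *: x1 + (1 - t) *: x2)%R) (fun u => (t * f1 u + (1 - t) * f2 u)%R)
      <= t%:E * h x1 f1 + (1 - t)%:E * h x2 f2)%E.

Definition HT (T : X -> set (X -> R)) (h : X -> (X -> R) -> \bar R) : Prop :=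
  lsc h /\ convex_fun h /\
  (forall x f, is_dual f -> ((f x)%:E <= h x f)%E) /\
  (forall x f, T x f -> h x f = (f x)%:E).

Definition fconj (g : X -> (X -> R) -> \bar R) (ys : X -> R) (y : X) : \bar R :=
  ereal_sup [set e | exists x xs, is_dual xs /\ e = ((ys x + xs y)%:E - g x xs)%E].

Definition Aop (h : X -> (X -> R) -> \bar R) : X -> (X -> R) -> \bar R :=
  fun x xs => ((2^-1)%:E * (h x xs + fconj h xs x))%E.

Definition esubdiff (h : X -> (X -> R) -> \bar R) (eta : R) (x : X) (xs : X -> R)
  (ys : X -> R) (y : X) : Prop :=
  is_dual ys /\ (h x xs < +oo)%E /\
  forall w ws, is_dual ws ->
    (h x xs + (ys (w - x) + (ws y - xs y) - eta)%:E <= h w ws)%E.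

Definition Tbreve (h : X -> (X -> R) -> \bar R) (eps : R) (x : X) : set (X -> R) :=
  [set xs | is_dual xs /\ esubdiff h (2 * eps) x xs xs x].

Definition Lg (g : X -> (X -> R) -> \bar R) (eps : R) (x : X) : set (X -> R) :=
  [set xs | is_dual xs /\ (g x xs <= (xs x + eps)%:E)%E].

Definition additive_enl (E : R -> X -> set (X -> R)) : Prop :=
  forall e1 e2 x y xs ys, 0 <= e1 -> 0 <= e2 -> E e1 x xs -> E e2 y ys ->
    - (e1 + e2) <= xs (x - y) - ys (x - y).

Definition is_enlargement (T : X -> set (X -> R)) (E : R -> X -> set (X -> R)) :=
  exists g, HT T g /\ forall eps x, 0 <= eps -> E eps x = Lg g eps x.

Definition max_additive_enl (T : X -> set (X -> R)) (E : R -> X -> set (X -> R)) :=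
  is_enlargement T E /\ additive_enl E /\
  forall E', is_enlargement T E' -> additive_enl E' ->
    (forall eps x, 0 <= eps -> E eps x `<=` E' eps x) ->
    forall eps x, 0 <= eps -> E eps x = E' eps x.

End Defs.

(* Main.v *)
Require Import Defs.
From HB Require Import structures.
From mathcomp Require Import all_boot all_order all_algebra.
From mathcomp Require Import all_classical all_reals all_analysis.
Import Order.TTheory GRing.Theory Num.Theory.
Import numFieldNormedType.Exports.
Local Open Scope classical_set_scope.
Local Open Scope ring_scope.
From mathcomp Require Import ring lra.
Section Aux.
Context {R : realType} {X : normedModType R}.
Local Notation D := (@is_dual R X).

Lemma dualE {f : X -> R} : D f -> forall a u v, f (a *: u + v) = a * f u + f v.
Proof. by case=> L _; apply: L. Qed.

Lemma dual0 {f : X -> R} : D f -> f 0 = 0.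
Proof.
move=> Df; have := dualE Df 1 0 0; rewrite scale1r addr0 mul1r => H.
lra.
Qed.

Lemma dualD {f : X -> R} : D f -> forall u v, f (u + v) = f u + f v.
Proof. by move=> Df u v; rewrite -[u]scale1r dualE // mul1r scale1r. Qed.

Lemma dualZ {f : X -> R} : D f -> forall a u, f (a *: u) = a * f u.
Proof. by move=> Df a u; rewrite -[a *: u]addr0 dualE // dual0 // addr0. Qed.

Lemma dualN {f : X -> R} : D f -> forall u, f (- u) = - f u.
Proof. by move=> Df u; rewrite -scaleN1r dualZ // mulN1r. Qed.

Lemma dualB {f : X -> R} : D f -> forall u v, f (u - v) = f u - f v.
Proof. by move=> Df u v; rewrite dualD // dualN. Qed.

Lemma dual_comb f g a b : D f -> D g -> D (fun u => a * f u + b * g u).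
Proof.
move=> Df Dg; split.
  move=> c u v; rewrite (dualE Df) (dualE Dg); ring.
move=> x; apply: (@continuousD _ _ _ (fun u => a * f u) (fun u => b * g u)).
  apply: (@continuousM _ _ (fun=> a) f); first exact: cst_continuous.
  by case: Df => _ /(_ x).
apply: (@continuousM _ _ (fun=> b) g); first exact: cst_continuous.
by case: Dg => _ /(_ x).
Qed.

Lemma dual_add f g : D f -> D g -> D (fun u => f u + g u).
Proof.
move=> Df Dg; have := @dual_comb f g 1 1 Df Dg.
by have -> : (fun u => 1 * f u + 1 * g u) = (fun u => f u + g u)
  by apply: funext => u; rewrite !mul1r.
Qed.

Lemma dual_sub f g : D f -> D g -> D (fun u => f u - g u).
Proof.
move=> Df Dg; have := @dual_comb f g 1 (-1) Df Dg.
by have -> : (fun u => 1 * f u + -1 * g u) = (fun u => f u - g u)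
  by apply: funext => u; rewrite mul1r mulN1r.
Qed.

Lemma dual_cst0 : D (fun _ => 0).
Proof.
split; first by move=> *; rewrite mulr0 addr0.
by move=> x; exact: cst_continuous.
Qed.

End Aux.
Section Norm.
Context {R : realType} {X : normedModType R}.
Local Notation D := (@is_dual R X).

Lemma dual_bounded {f : X -> R} : D f ->
  exists2 K, 0 < K & forall y : X, `|y| <= 1 -> `|f y| <= K.
Proof.
move=> Df; have := proj2 Df 0; move/cvgrPdist_lt => /(_ 1 ltr01).
move/nbhs_norm0P => [e e0 He].
exists (2 / e); first by rewrite divr_gt0.
move=> y y1.
have Hy' : `|(e / 2) *: y| < e.
  rewrite normrZ ger0_norm ?divr_ge0 ?(ltW e0) //.
  have : e / 2 * `|y| <= e / 2 by rewrite ler_piMr ?divr_ge0 ?(ltW e0).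
  move/le_lt_trans; apply; rewrite ltr_pdivrMr // ltr_pMr //; lra.
have := He _ Hy'; rewrite /= (dual0 Df) sub0r normrN (dualZ Df) normrM.
rewrite ger0_norm ?divr_ge0 ?(ltW e0) // => H.
rewrite ler_pdivlMr //.
have -> : `|f y| * e = 2 * (e / 2 * `|f y|) by field.
lra.
Qed.

Lemma dnorm_hassup {f : X -> R} : D f ->
  has_sup [set `|f x| | x in [set x : X | `|x| <= 1]].
Proof.
move=> Df; split.
  by exists `|f 0|, 0 => //=; rewrite normr0.
case: (dual_bounded Df) => K K0 HK; exists K => v [x /= x1 <-].
exact: HK.
Qed.

Lemma dnorm_ge {f : X -> R} : D f -> forall x : X, `|x| <= 1 -> `|f x| <= dnorm f.
Proof.
move=> Df x x1; apply: (sup_upper_bound (dnorm_hassup Df)).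
by exists x.
Qed.

Lemma dnorm_ge0 {f : X -> R} : D f -> 0 <= dnorm f.
Proof.
move=> Df; have h0 : `|(0:X)| <= 1 by rewrite normr0 ler01.
exact: le_trans (normr_ge0 _) (dnorm_ge Df 0 h0).
Qed.

Lemma dnorm_ub {f : X -> R} : D f -> forall y : X, `|f y| <= dnorm f * `|y|.
Proof.
move=> Df y; have [->|y0] := eqVneq y 0.
  by rewrite (dual0 Df) !normr0 mulr0.
have ny0 : 0 < `|y| by rewrite normr_gt0.
have H1 : `|(`|y|^-1 *: y)| <= 1.
  by rewrite normrZ ger0_norm ?invr_ge0 ?normr_ge0 // mulVf ?lt0r_neq0.
have := dnorm_ge Df _ H1; rewrite (dualZ Df) normrM ger0_norm ?invr_ge0 ?normr_ge0 //.
move=> H; rewrite -ler_pdivrMr //; by rewrite mulrC.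
Qed.

End Norm.
Section Conj.
Context {R : realType} {X : normedModType R}.
Local Notation D := (@is_dual R X).
Local Open Scope ereal_scope.

Definition Cj (f : X -> (X -> R) -> \bar R) : X -> (X -> R) -> \bar R :=
  fun x xs => fconj f xs x.

Lemma Cj_ge f y ys x xs : D xs -> (ys x + xs y)%:E - f x xs <= Cj f y ys.
Proof. by move=> Dxs; apply: ereal_sup_ubound; exists x, xs. Qed.

Lemma Cj_le f y ys M :
  (forall x xs, D xs -> (ys x + xs y)%:E - f x xs <= M) -> Cj f y ys <= M.
Proof. by move=> H; apply: ge_ereal_sup => e [x [xs [Dxs ->]]]; exact: H. Qed.

Lemma E_swap (a : R) (F C : \bar R) : a%:E - F <= C -> a%:E - C <= F.
Proof.
case: F => [f||]; case: C => [c||] //=; rewrite ?lee_fin ?leey ?leNye //; lra.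
Qed.

Lemma E_subfin (a c : R) (F : \bar R) : (a%:E - F <= c%:E) <-> ((a - c)%:E <= F).
Proof.
case: F => [f||] //=; rewrite ?lee_fin ?leey ?leNye //; lra.
Qed.

Lemma E_add_ge (a : R) (F G : \bar R) : F != -oo -> G != -oo ->
  a%:E - F <= G -> a%:E <= F + G.
Proof.
case: F => [f||]; case: G => [g||] //=; rewrite ?lee_fin ?leey ?leNye //; lra.
Qed.

Lemma E_add_ge' (a : R) (F G : \bar R) : F != -oo -> a%:E <= F + G -> a%:E - F <= G.
Proof.
case: F => [f||]; case: G => [g||] //=; rewrite ?lee_fin ?leey ?leNye //; lra.
Qed.

Lemma half_cases (H C : \bar R) : H != -oo -> C != -oo ->
  ((2^-1)%:E * (H + C) = +oo /\ (H = +oo \/ C = +oo)) \/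
  exists r c, [/\ H = r%:E, C = c%:E & (2^-1)%:E * (H + C) = ((r + c) / 2)%:E].
Proof.
case: H => [r||]; case: C => [c||] //= _ _.
- by right; exists r, c; rewrite mulrC.
- by left; rewrite mulry gtr0_sg ?invr_gt0 // mul1e; split; [|right].
- by left; rewrite mulry gtr0_sg ?invr_gt0 // mul1e; split; [|left].
- by left; rewrite mulry gtr0_sg ?invr_gt0 // mul1e; split; [|left].
Qed.

Lemma Cj_antitone f1 f2 : (forall x xs, D xs -> f1 x xs <= f2 x xs) ->
  forall y ys, Cj f2 y ys <= Cj f1 y ys.
Proof.
move=> H y ys; apply: Cj_le => x xs Dxs; apply: le_trans (Cj_ge _ _ _ _ _ Dxs).
by apply: leeB => //; exact: H.
Qed.

Lemma Cj_ext f1 f2 : (forall x xs, D xs -> f1 x xs = f2 x xs) ->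
  forall y ys, Cj f1 y ys = Cj f2 y ys.
Proof.
move=> H y ys; apply/eqP; rewrite eq_le; apply/andP; split; apply: Cj_antitone.
- by move=> x xs Dxs; rewrite H.
- by move=> x xs Dxs; rewrite H.
Qed.

Lemma CjCj_le f x xs : D xs -> Cj (Cj f) x xs <= f x xs.
Proof.
move=> Dxs; apply: Cj_le => y ys Dys; apply: E_swap.
by rewrite [(xs _ + _)%R]addrC; apply: Cj_ge.
Qed.

End Conj.
Section ConjProps.
Context {R : realType} {X : normedModType R}.
Local Notation D := (@is_dual R X).
Local Open Scope ereal_scope.

Lemma half_y : (2^-1)%:E * +oo = +oo :> \bar R.
Proof. by rewrite mulry gtr0_sg ?invr_gt0 // mul1e. Qed.

Lemma ty (t : R) : (0 < t)%R -> t%:E * +oo = +oo.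
Proof. by move=> t0; rewrite mulry gtr0_sg // mul1e. Qed.

Lemma comb_le (t al be : R) (A B : \bar R) : (0 < t)%R -> (t < 1)%R ->
  al%:E <= A -> be%:E <= B -> (t * al + (1 - t) * be)%:E <= t%:E * A + (1 - t)%:E * B.
Proof.
move=> t0 t1; have t1' : (0 < 1 - t)%R by rewrite subr_gt0.
case: A => [a||]; case: B => [b||] //=; rewrite ?lee_fin.
- move=> Ha Hb; nra.
- by move=> _ _; rewrite (ty _ t1') /= leey.
- by move=> _ _; rewrite (ty _ t0) /= leey.
- by move=> _ _; rewrite (ty _ t0) (ty _ t1') /= leey.
Qed.

Lemma Cj_convex (f : X -> (X -> R) -> \bar R) : convex_fun (Cj f).
Proof.
move=> x1 x2 f1 f2 t Df1 Df2 t0 t1; apply: Cj_le => y ys Dys.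
rewrite (dualD Dys) !(dualZ Dys).
have HA := Cj_ge f x1 f1 y ys Dys; have HB := Cj_ge f x2 f2 y ys Dys.
move: HA HB; case: (f y ys) => [p||] /=.
- rewrite -!EFinD; move=> HA HB.
  have -> : (t * f1 y + (1 - t) * f2 y + (t * ys x1 + (1 - t) * ys x2) - p =
     t * (f1 y + ys x1 - p) + (1 - t) * (f2 y + ys x2 - p))%R by ring.
  by apply: comb_le.
- by move=> _ _; rewrite addeNy leNye.
- rewrite !addey //; move=> HA HB.
  have -> : Cj f x1 f1 = +oo by apply/eqP; rewrite eq_le leey.
  have -> : Cj f x2 f2 = +oo by apply/eqP; rewrite eq_le leey.
  rewrite (ty _ t0) (@ty (1 - t)) ?subr_gt0 // /=; exact: leey.
Qed.

Lemma Cj_lsc (f : X -> (X -> R) -> \bar R) : lsc (Cj f).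
Proof.
move=> x fs Dfs a Ha.
have [e [y0 [ys0 [Dys0 ->]]] ae] := ereal_sup_gt Ha.
move: ae; case Ef: (f y0 ys0) => [p||] /=; last first.
- move=> _; exists 1%R => // y g Dg _.
  apply: lt_le_trans (Cj_ge f y g y0 ys0 Dys0); rewrite Ef /= addey //.
  exact: ltry.
- by rewrite ltNge leNye.
rewrite lte_fin => ae.
set del := (fs y0 + ys0 x - p - a)%R.
have del0 : (0 < del)%R by rewrite /del; lra.
set K := (dnorm ys0 + `|y0| + 1)%R.
have dn0 := dnorm_ge0 Dys0.
have K0 : (0 < K)%R by rewrite /K; have := normr_ge0 y0; lra.
exists (del / (2 * K))%R; first by rewrite divr_gt0 // mulr_gt0.
move=> y g Dg Hd.
apply: lt_le_trans (Cj_ge f y g y0 ys0 Dys0); rewrite Ef /= lte_fin.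
have Dgf := @dual_sub _ _ g fs Dg Dfs.
have H1 := dnorm_ub Dgf y0; have H2 := dnorm_ub Dys0 (y - x)%R.
rewrite (dualB Dys0) in H2.
move: Hd; rewrite /ddist.
set qn := dnorm (fun u => g u - fs u)%R; set pn := (`|y - x|)%R.
have qn0 : (0 <= qn)%R := dnorm_ge0 Dgf.
have pn0 : (0 <= pn)%R := normr_ge0 _.
move: H1 H2; rewrite -/qn -/pn => H1 H2 Hd.
have Hd' : ((pn + qn) * K < del / 2)%R.
  have -> : (del / 2 = (del / (2 * K)) * K)%R by field; rewrite gt_eqF.
  by rewrite ltr_pM2r.
have hy0 : (`|y0| <= K)%R by rewrite /K; lra.
have hdn : (dnorm ys0 <= K)%R by rewrite /K; have := normr_ge0 y0; lra.
have B1 : (qn * `|y0| <= qn * K)%R by rewrite ler_wpM2l.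
have B2 : (dnorm ys0 * pn <= K * pn)%R by rewrite ler_wpM2r.
have E1 : (`|g y0 - fs y0| <= qn * `|y0|)%R by [].
have := le_trans H2 B2; rewrite ler_norml => /andP [E2a E2b].
have := le_trans E1 B1; rewrite ler_norml => /andP [E3a E3b].
rewrite /del in Hd' *; lra.
Qed.

End ConjProps.
Lemma dyadic {R : realType} (m k : R) :
  (forall n, (0 < n)%N -> m <= (2^-1)^+n * k) -> m <= 0.
Proof.
move=> H; rewrite leNgt; apply/negP => m0.
have k0 : 0 < k.
  have := H 1%N isT; rewrite expr1 => h1; rewrite -(@pmulr_rgt0 _ (2^-1)) //.
  exact: lt_le_trans h1.
have km0 : 0 <= k / m by rewrite divr_ge0 // ltW.
set n0 := Num.Def.archi_bound (k / m).
have Hn0 := archi_boundP km0; rewrite -/n0 in Hn0.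
have := H n0.+1 isT.
have H2 : (n0.+1%:R <= (2:R) ^+ n0.+1).
  have : (n0.+1 <= 2 ^ n0.+1)%N by apply: ltnW; apply: ltn_expl.
  by rewrite -(ler_nat R) natrX.
have H3 : n0%:R <= n0.+1%:R :> R by rewrite ler_nat.
have p2 : 0 < (2:R) ^+ n0.+1 by rewrite exprn_gt0.
rewrite exprVn => H4.
have H5 : m * (2:R) ^+ n0.+1 <= k.
  by rewrite -ler_pdivlMr // mulrC.
have H6 : k < m * n0%:R by rewrite -ltr_pdivrMl // mulrC.
nra.
Qed.

Section TFacts.
Context {R : realType} {X : normedModType R}.
Local Notation D := (@is_dual R X).
Local Open Scope ereal_scope.

Lemma Cj_ge_pi (T : X -> set (X -> R)) (f : X -> (X -> R) -> \bar R) :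
  max_monotone_op T -> (forall y ys, T y ys -> f y ys = (ys y)%:E) ->
  forall x xs, D xs -> (xs x)%:E <= Cj f x xs.
Proof.
move=> [Top [Tmon Tmax]] Hf x xs Dxs; rewrite leNgt; apply/negP => Hlt.
have key : forall y ys, T y ys -> (0 < xs (x - y) - ys (x - y))%R.
  move=> y ys Tyy; have Dys := Top _ _ Tyy.
  have := le_lt_trans (Cj_ge f x xs y ys Dys) Hlt.
  rewrite Hf // -EFinB lte_fin (dualB Dxs) (dualB Dys) => H; lra.
pose S := fun z => [set zs | T z zs \/ (z = x /\ zs = xs)].
have Sop : is_operator S by move=> z zs [/Top //|[_ ->]].
have Smon : monotone_op S.
  move=> y z ys zs [Ty|[-> ->]] [Tz|[-> ->]].
  - exact: Tmon Ty Tz.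
  - have := key _ _ Ty; have Dys := Top _ _ Ty.
    rewrite !(dualB Dxs) !(dualB Dys) => H; lra.
  - have := key _ _ Tz; by move/ltW.
  - by rewrite subrr.
have := Tmax S Sop Smon (fun z zs Tz => or_introl Tz) x.
move=> SE; have : T x xs by rewrite -SE; right.
move=> Txx; have := le_lt_trans (Cj_ge f x xs x xs Dxs) Hlt.
by rewrite Hf // -EFinB lte_fin; lra.
Qed.

Lemma h_ge_fitz (T : X -> set (X -> R)) h : is_operator T -> HT T h ->
  forall a as_ w ws, T a as_ -> D ws -> ((ws a + as_ w - as_ a)%:E <= h w ws).
Proof.
move=> Top [_ [hconv [hpi hT]]] a as_ w ws Ta Dws.
have Das := Top _ _ Ta.
have := hpi w ws Dws; case Eh: (h w ws) => [r| |]; last by rewrite leeNy_eq.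
2: by move=> _; rewrite leey.
rewrite lee_fin => rpi; rewrite lee_fin.
set W := ws w; set c := (ws a + as_ w - as_ a)%R.
suff : (c - r <= 0)%R by lra.
apply: (@dyadic _ _ (c - W)) => n n0.
set t := ((2^-1)^+n)%R.
have t0 : (0 < t)%R by rewrite exprn_gt0.
have t1 : (t < 1)%R by rewrite exprn_ilt1 // ?invr_ge0 ?invf_lt1 ?ltr1n // -lt0n.
have := hconv w a ws as_ t Dws Das t0 t1.
rewrite Eh (hT a as_ Ta).
have Dc := @dual_comb _ _ ws as_ t (1 - t) Dws Das.
move=> H0; have := le_trans (hpi (t *: w + (1 - t) *: a)%R _ Dc) H0.
rewrite /= -!EFinM -EFinD lee_fin.
rewrite !(dualD Dws) !(dualD Das) !(dualZ Dws) !(dualZ Das) -/W => H.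
have H' : (t * (t * W + (1 - t) * (ws a + as_ w - as_ a)) <= t * r)%R.
  move: H; rewrite /c; nra.
rewrite -/c in H'.
have H'' : (t * W + (1 - t) * c <= r)%R by rewrite -(ler_pM2l t0).
lra.
Qed.

End TFacts.
Section Generic.
Context {R : realType} {X : normedModType R}.
Local Notation D := (@is_dual R X).
Local Open Scope ereal_scope.
Implicit Types f g : X -> (X -> R) -> \bar R.

Definition addv f := forall x xs y ys, D xs -> D ys ->
  (xs y + ys x)%:E <= f x xs + f y ys.
Definition gepi f := forall x xs, D xs -> (xs x)%:E <= f x xs.

Lemma gepi_ninf f x xs : gepi f -> D xs -> f x xs != -oo.
Proof.
by move=> H Dxs; have := H x xs Dxs; case: (f x xs).
Qed.

Lemma Cj_le_addv f : gepi f -> (forall x xs, D xs -> Cj f x xs <= f x xs) -> addv f.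
Proof.
move=> Hp HC x xs y ys Dxs Dys; apply: E_add_ge; try exact: gepi_ninf.
rewrite [(xs y + _)%R]addrC; apply: le_trans (Cj_ge f y ys x xs Dxs) _.
exact: HC.
Qed.

Lemma addv_Cj_le f : gepi f -> addv f -> forall x xs, D xs -> Cj f x xs <= f x xs.
Proof.
move=> Hp Ha x xs Dxs; apply: Cj_le => y ys Dys.
apply: E_add_ge'; first exact: gepi_ninf.
by rewrite [(xs y + _)%R]addrC; apply: Ha.
Qed.

Lemma Lg_additive g : addv g -> additive_enl (Lg g).
Proof.
move=> Ha e1 e2 x y xs ys e10 e20 [Dxs H1] [Dys H2].
have := le_trans (Ha x xs y ys Dxs Dys) (leeD H1 H2).
rewrite -EFinD lee_fin (dualB Dxs) (dualB Dys) => H; lra.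
Qed.

Lemma Lg_addv g : gepi g -> additive_enl (Lg g) -> addv g.
Proof.
move=> Hp Ha x xs y ys Dxs Dys.
have n1 := gepi_ninf _ _ _ Hp Dxs; have n2 := gepi_ninf _ _ _ Hp Dys.
have p1 := Hp x xs Dxs; have p2 := Hp y ys Dys.
move: n1 n2 p1 p2; case E1: (g x xs) => [r1| |] //; case E2: (g y ys) => [r2| |] //.
- rewrite !lee_fin => _ _ p1 p2.
  have L1 : Lg g (r1 - xs x)%R x xs by split => //; rewrite E1 lee_fin; lra.
  have L2 : Lg g (r2 - ys y)%R y ys by split => //; rewrite E2 lee_fin; lra.
  have := Ha _ _ _ _ _ _ _ _ L1 L2; rewrite (dualB Dxs) (dualB Dys).
  rewrite !subr_ge0 => H; have {}H := H p1 p2.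
  lra.
- by move=> *; rewrite addey // leey.
- by move=> *; rewrite addye // leey.
- by move=> *; rewrite addye // leey.
Qed.

Lemma Lg_sub_le g g' : gepi g -> (forall e x, (0 <= e)%R -> Lg g e x `<=` Lg g' e x) ->
  forall x xs, D xs -> g' x xs <= g x xs.
Proof.
move=> Hp Hs x xs Dxs; have := Hp x xs Dxs.
case E: (g x xs) => [r| |]; last by rewrite leeNy_eq.
2: by move=> _; rewrite leey.
rewrite lee_fin => p1.
have L : Lg g (r - xs x)%R x xs by split => //; rewrite E lee_fin; lra.
have r0 : (0 <= r - xs x)%R by rewrite subr_ge0.
have [_] := Hs _ x r0 xs L.
by rewrite subrKC.
Qed.

Lemma Lg_ext g1 g2 : (forall x xs, D xs -> g1 x xs = g2 x xs) ->
  forall e x, Lg g1 e x = Lg g2 e x.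
Proof.
move=> H e x; apply/seteqP; split => xs [Dxs Hx]; split => //.
- by rewrite -H.
- by rewrite H.
Qed.

End Generic.
Section Gen2.
Context {R : realType} {X : normedModType R}.
Local Notation D := (@is_dual R X).

Definition Nq (as_ : X -> R) : R := sup [set (2 * as_ b - `|b| ^+ 2)%R | b in [set: X]].

Lemma Nq_ge as_ : D as_ -> forall b, 2 * as_ b - `|b| ^+ 2 <= Nq as_.
Proof.
move=> Das b; apply: sup_upper_bound; last by exists b.
split; first by exists (2 * as_ 0 - `|(0:X)| ^+ 2), 0.
exists (dnorm as_ ^+ 2) => _ [c _ <-].
have := dnorm_ub Das c; have := dnorm_ge0 Das; have := normr_ge0 c.
rewrite ler_norml => ? ? /andP [? ?].
have := sqr_ge0 (dnorm as_ - `|c|); rewrite !expr2 => ?; nra.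
Qed.

Lemma Nq0 : Nq (fun _ => 0) <= 0.
Proof.
apply: ge_sup; first by exists (2 * 0 - `|(0:X)| ^+ 2), 0.
by move=> _ [c _ <-]; rewrite mulr0 sub0r oppr_le0 sqr_ge0.
Qed.

Definition qn (a : X) (as_ : X -> R) : R := `|a| ^+ 2 + Nq as_.

Lemma q_add a as_ b bs : D as_ -> D bs -> 2 * (as_ b + bs a) <= qn a as_ + qn b bs.
Proof.
move=> Das Dbs; have := Nq_ge _ Das b; have := Nq_ge _ Dbs a; rewrite /qn; lra.
Qed.

Lemma q0 : qn 0 (fun _ => 0) <= 0.
Proof. by rewrite /qn normr0 expr0n /= add0r Nq0. Qed.

Local Open Scope ereal_scope.

Lemma half3_cases (G C : \bar R) (s : R) : G != -oo -> C != -oo ->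
  ((2^-1)%:E * (G + C + s%:E) = +oo) \/
  exists r c, [/\ G = r%:E, C = c%:E & (2^-1)%:E * (G + C + s%:E) = ((r + c + s) / 2)%:E].
Proof.
case: G => [r||]; case: C => [c||] //= _ _.
- by right; exists r, c; split => //; rewrite -!EFinD -EFinM mulrC.
- by left; rewrite ?addey ?addye // half_y.
- by left; rewrite ?addye // half_y.
- by left; rewrite ?addye // half_y.
Qed.

Lemma inf_ninf (S : set (\bar R)) (c : R) :
  (forall e1 e2, S e1 -> S e2 -> c%:E <= e1 + e2) -> (forall e, S e -> e != -oo) ->
  ereal_inf S != -oo.
Proof.
move=> Hs Hn; apply/negP => /eqP Hinf.
have : ereal_inf S < 0%:E by rewrite Hinf ltNyr.
move=> /ereal_inf_lt [e1 S1 e1lt].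
have : ereal_inf S < (c - fine e1)%:E by rewrite Hinf ltNyr.
move=> /ereal_inf_lt [e2 S2 e2lt].
have := Hs _ _ S1 S2; have := Hn _ S1; have := Hn _ S2.
move: e1lt e2lt; case: e1 {S1} => [r1||] //; case: e2 {S2} => [r2||] //=.
rewrite !lte_fin lee_fin => ? ? _ _ ?; clear Hinf; lra.
Qed.

Lemma inf_add (S1 S2 : set (\bar R)) (b : R) :
  (forall e1 e2, S1 e1 -> S2 e2 -> b%:E <= e1 + e2) ->
  (forall e, S1 e -> e != -oo) -> (forall e, S2 e -> e != -oo) ->
  ereal_inf S1 != -oo -> ereal_inf S2 != -oo -> b%:E <= ereal_inf S1 + ereal_inf S2.
Proof.
move=> Hs Hn1 Hn2 I1 I2.
move: I1 I2; case E1: (ereal_inf S1) => [i1||] //; case E2: (ereal_inf S2) => [i2||] // _ _;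
  try by rewrite /= leey.
rewrite leNgt; apply/negP; rewrite -EFinD lte_fin => bi.
set d := (b - (i1 + i2))%R.
have d0 : (0 < d)%R by rewrite /d; lra.
have : ereal_inf S1 < (i1 + d / 2)%:E by rewrite E1 lte_fin; lra.
move=> /ereal_inf_lt [e1 S1e e1lt].
have : ereal_inf S2 < (i2 + d / 2)%:E by rewrite E2 lte_fin; lra.
move=> /ereal_inf_lt [e2 S2e e2lt].
have := Hs _ _ S1e S2e; have := Hn1 _ S1e; have := Hn2 _ S2e.
move: e1lt e2lt; case: e1 {S1e} => [r1||] //; case: e2 {S2e} => [r2||] //=.
rewrite !lte_fin lee_fin => ? ? _ _ ?; have dE : d = (b - (i1 + i2))%R by [].
clear E1 E2; clearbody d; lra.
Qed.

Lemma T_nonempty (T : X -> set (X -> R)) : max_monotone_op T -> exists x0 xs0, T x0 xs0.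
Proof.
move=> [Top [Tmon Tmax]].
have [//|NT] := pselect (exists x0 xs0, T x0 xs0).
pose S := fun x : X => [set f : X -> R | x = 0%R /\ f = (fun _ => 0%R)].
have Sop : is_operator S by move=> x f [_ ->]; exact: dual_cst0.
have Smon : monotone_op S by move=> x y f g [_ ->] [_ ->]; rewrite subrr.
have Hsub : forall x, T x `<=` S x by move=> x f Tx; exfalso; apply: NT; exists x, f.
have := Tmax S Sop Smon Hsub 0%R; move=> SE.
exfalso; apply: NT; exists 0%R, (fun _ => 0%R); rewrite -SE; by split.
Qed.

End Gen2.
Section Main.
Context {R : realType} {X : normedModType R}.
Local Notation D := (@is_dual R X).
Local Open Scope ereal_scope.
Context (T : X -> set (X -> R)) (h : X -> (X -> R) -> \bar R).
Context (HM : max_monotone_op T) (HH : HT T h).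

Lemma Top : is_operator T. Proof. by case: HM. Qed.
Lemma hpi : gepi h. Proof. by case: HH => _ [_ []]. Qed.
Lemma hT y ys : T y ys -> h y ys = (ys y)%:E. Proof. by case: HH => _ [_ [_]]; apply. Qed.
Lemma Chpi : gepi (Cj h). Proof. exact: Cj_ge_pi HM hT. Qed.

Lemma ChT y ys : T y ys -> Cj h y ys = (ys y)%:E.
Proof.
move=> Ty; apply/eqP; rewrite eq_le; apply/andP; split; last first.
  exact: Chpi _ _ (Top _ _ Ty).
apply: Cj_le => w ws Dws; apply/E_subfin.
have := @h_ge_fitz _ _ T h Top HH y ys w ws Ty Dws.
by rewrite [(ys w + ws y)%R]addrC.
Qed.

Lemma gAE x xs : Aop h x xs = (2^-1)%:E * (h x xs + Cj h x xs).
Proof. by []. Qed.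

Lemma gpi : gepi (Aop h).
Proof.
move=> x xs Dxs; rewrite gAE.
have p1 := hpi x xs Dxs; have p2 := Chpi x xs Dxs.
case: (half_cases _ _ (gepi_ninf _ x _ hpi Dxs) (gepi_ninf _ x _ Chpi Dxs)).
  by move=> [-> _]; rewrite leey.
move=> [r [c [E1 E2 ->]]]; move: p1 p2; rewrite E1 E2 !lee_fin => ? ?; lra.
Qed.

Lemma gT y ys : T y ys -> Aop h y ys = (ys y)%:E.
Proof.
move=> Ty; rewrite gAE hT // ChT // -EFinD -EFinM; congr EFin; lra.
Qed.

Lemma gadd : addv (Aop h).
Proof.
move=> x xs y ys Dxs Dys; rewrite !gAE.
have Y1 := Cj_ge h y ys x xs Dxs; have Y2 := Cj_ge h x xs y ys Dys.
case: (half_cases _ _ (gepi_ninf _ x _ hpi Dxs) (gepi_ninf _ x _ Chpi Dxs)).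
  move=> [-> _]; rewrite addye ?leey //.
  exact: gepi_ninf _ y _ gpi Dys.
move=> [r1 [c1 [E1 E2 ->]]].
case: (half_cases _ _ (gepi_ninf _ y _ hpi Dys) (gepi_ninf _ y _ Chpi Dys)).
  by move=> [-> _]; rewrite addey ?leey.
move=> [r2 [c2 [E3 E4 ->]]].
move: Y1 Y2; rewrite E1 E2 E3 E4 -!EFinB -EFinD !lee_fin => ? ?; lra.
Qed.

Lemma Tbreve_Lg e x : Tbreve h e x = Lg (Aop h) e x.
Proof.
apply/seteqP; split => xs.
- move=> [Dxs [_ [hfin Hw]]]; split => //.
  have := hpi x xs Dxs; move: hfin Hw; case E: (h x xs) => [r| |] //= _ Hw rpi.
  set c := (2 * (xs x + e) - r)%R.
  have Cc : Cj h x xs <= c%:E.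
    apply: Cj_le => w ws Dws; apply/E_subfin.
    apply: le_trans (Hw w ws Dws); rewrite -EFinD lee_fin (dualB Dxs) /c; lra.
  rewrite gAE E.
  case: (half_cases _ _ (gepi_ninf _ x _ hpi Dxs) (gepi_ninf _ x _ Chpi Dxs)); rewrite E.
    by move=> [_ [//|Ey]]; move: Cc; rewrite Ey.
  move=> [r' [c' [[<-] E2 ->]]]; move: Cc; rewrite E2 !lee_fin /c => ?; lra.
- move=> [Dxs HL]; move: HL; rewrite gAE.
  case: (half_cases _ _ (gepi_ninf _ x _ hpi Dxs) (gepi_ninf _ x _ Chpi Dxs)).
    by move=> [->].
  move=> [r [c [E1 E2 ->]]]; rewrite lee_fin => HL.
  split => //; split => //; split; first by rewrite E1 ltry.
  move=> w ws Dws; have := Cj_ge h x xs w ws Dws; rewrite E2 => /E_subfin.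
  apply: le_trans; rewrite E1 -EFinD lee_fin (dualB Dxs); lra.
Qed.

Lemma TbE : Tbreve h = Lg (Aop h).
Proof. by apply: funext => e; apply: funext => x; apply: Tbreve_Lg. Qed.

Lemma Tbreve_additive : additive_enl (Tbreve h).
Proof. by rewrite TbE; apply: Lg_additive; exact: gadd. Qed.

Lemma backward : (forall x xs, D xs -> Cj (Aop h) x xs = Aop h x xs) ->
  max_additive_enl T (Tbreve h).
Proof.
move=> HC; split; [|split; first exact: Tbreve_additive].
  exists (Cj (Aop h)); split.
    split; first exact: Cj_lsc.
    split; first exact: Cj_convex.
    split; first by move=> x xs Dxs; rewrite HC //; exact: gpi.
    by move=> x f Tx; rewrite HC ?gT //; exact: Top _ _ Tx.
  move=> eps x _; rewrite TbE; apply: Lg_ext => y ys Dys; by rewrite HC.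
move=> E' [g' [[_ [_ [g'pi _]]] HE]] Hadd Hsub.
have Hadd' : additive_enl (Lg g').
  move=> e1 e2 x y xs ys e10 e20 L1 L2.
  by apply: (Hadd e1 e2 x y xs ys) => //; rewrite HE.
have ag' := Lg_addv g' g'pi Hadd'.
have le1 : forall x xs, D xs -> g' x xs <= Aop h x xs.
  apply: Lg_sub_le; first exact: gpi.
  by move=> e x e0; rewrite -TbE -HE //; exact: Hsub.
have eqg : forall x xs, D xs -> g' x xs = Aop h x xs.
  move=> x xs Dxs; apply/eqP; rewrite eq_le le1 //=.
  rewrite -HC //; apply: le_trans (addv_Cj_le g' g'pi ag' x xs Dxs).
  exact: Cj_antitone _ _ le1 x xs.
move=> eps x e0; rewrite HE // TbE; apply: Lg_ext => y ys Dys; by rewrite eqg.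
Qed.

Lemma selfconj : (forall x xs, D xs -> fconj h xs x = h x xs) ->
  forall x xs, D xs -> Cj (Aop h) x xs = Aop h x xs.
Proof.
move=> HC.
have Ah : forall x xs, D xs -> Aop h x xs = h x xs.
  move=> x xs Dxs; rewrite gAE /Cj HC //.
  case: (half_cases _ _ (gepi_ninf _ x _ hpi Dxs) (gepi_ninf _ x _ hpi Dxs)).
    by move=> [-> [->|->]].
  move=> [r [c [E1 E2 ->]]]; rewrite E1; move: E2; rewrite E1 => -[->].
  congr EFin; lra.
move=> x xs Dxs; rewrite (Cj_ext _ _ Ah) Ah //; exact: HC.
Qed.

Lemma gCg x xs : D xs -> Cj (Aop h) x xs <= Aop h x xs.
Proof. exact: addv_Cj_le _ gpi gadd x xs. Qed.

Lemma Cgpi : gepi (Cj (Aop h)).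
Proof. exact: Cj_ge_pi HM gT. Qed.

Definition Tu x xs a as_ := (2^-1)%:E * (Aop h (x + a)%R (fun w => xs w + as_ w)%R
  + Cj (Aop h) (x - a)%R (fun w => xs w - as_ w)%R + (qn a as_)%:E).

Lemma Tu_cases x xs a as_ : D xs -> D as_ ->
  (Tu x xs a as_ = +oo) \/
  exists r c, [/\ Aop h (x + a)%R (fun w => xs w + as_ w)%R = r%:E,
     Cj (Aop h) (x - a)%R (fun w => xs w - as_ w)%R = c%:E &
     Tu x xs a as_ = ((r + c + qn a as_) / 2)%:E].
Proof.
move=> Dxs Das.
have D1 := @dual_add _ _ xs as_ Dxs Das; have D2 := @dual_sub _ _ xs as_ Dxs Das.
exact: half3_cases (gepi_ninf _ _ _ gpi D1) (gepi_ninf _ _ _ Cgpi D2).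
Qed.

Lemma Tu_ne x xs a as_ : D xs -> D as_ -> Tu x xs a as_ != -oo.
Proof. by move=> Dxs Das; case: (Tu_cases x xs a as_ Dxs Das) => [->|[r [c [_ _ ->]]]]. Qed.

Lemma Tu_add x xs a as_ y ys b bs : D xs -> D as_ -> D ys -> D bs ->
  (xs y + ys x)%:E <= Tu x xs a as_ + Tu y ys b bs.
Proof.
move=> Dxs Das Dys Dbs.
case: (Tu_cases x xs a as_ Dxs Das) => [->|[r1 [c1 [E1 E2 ->]]]].
  by rewrite addye ?leey // Tu_ne.
case: (Tu_cases y ys b bs Dys Dbs) => [->|[r2 [c2 [E3 E4 ->]]]].
  by rewrite addey ?leey.
have Dxa := @dual_add _ _ xs as_ Dxs Das; have Dyb := @dual_add _ _ ys bs Dys Dbs.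
have Y1 := Cj_ge (Aop h) (y - b)%R (fun w => ys w - bs w)%R (x + a)%R _ Dxa.
have Y2 := Cj_ge (Aop h) (x - a)%R (fun w => xs w - as_ w)%R (y + b)%R _ Dyb.
rewrite E1 E4 -EFinB lee_fin /= in Y1; rewrite E3 E2 -EFinB lee_fin /= in Y2.
have Q := q_add a as_ b bs Das Dbs.
rewrite !(dualD Dxs, dualD Das, dualD Dys, dualD Dbs, dualB Dxs, dualB Das, dualB Dys, dualB Dbs) in Y1 Y2.
rewrite !(dualN Dxs, dualN Das, dualN Dys, dualN Dbs) in Y1 Y2.
rewrite -EFinD lee_fin; lra.
Qed.

Definition Pf x xs := ereal_inf [set e | exists a as_, D as_ /\ e = Tu x xs a as_].

Lemma P_le_Tu x xs a as_ : D as_ -> Pf x xs <= Tu x xs a as_.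
Proof. by move=> Das; apply: ereal_inf_lbound; exists a, as_. Qed.

Lemma P_ninf x xs : D xs -> Pf x xs != -oo.
Proof.
move=> Dxs; apply: (@inf_ninf _ _ (xs x + xs x)%R).
  by move=> _ _ [a [as_ [Das ->]]] [b [bs [Dbs ->]]]; apply: Tu_add.
by move=> _ [a [as_ [Das ->]]]; apply: Tu_ne.
Qed.

Lemma P_add : addv Pf.
Proof.
move=> x xs y ys Dxs Dys; apply: inf_add; try exact: P_ninf.
- by move=> _ _ [a [as_ [Das ->]]] [b [bs [Dbs ->]]]; apply: Tu_add.
- by move=> _ [a [as_ [Das ->]]]; apply: Tu_ne.
- by move=> _ [a [as_ [Das ->]]]; apply: Tu_ne.
Qed.

Lemma P_pi : gepi Pf.
Proof.
move=> x xs Dxs; have := P_add x xs x xs Dxs Dxs; have := P_ninf x xs Dxs.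
case: (Pf x xs) => [p| |] //= _; last by move=> _; rewrite leey.
rewrite -EFinD !lee_fin => ?; lra.
Qed.

Lemma Tu0 x xs : Tu x xs 0 (fun _ => 0%R) =
  (2^-1)%:E * (Aop h x xs + Cj (Aop h) x xs + (qn (0:X) (fun _ => 0%R))%:E).
Proof.
rewrite /Tu addr0 subr0.
have -> : (fun w => xs w + 0)%R = xs by apply: funext => w; rewrite addr0.
by have -> : (fun w => xs w - 0)%R = xs by apply: funext => w; rewrite subr0.
Qed.

Lemma Tu0_le x xs r c : Aop h x xs = r%:E -> Cj (Aop h) x xs = c%:E ->
  Tu x xs 0 (fun _ => 0%R) <= ((r + c) / 2)%:E.
Proof.
move=> E1 E2; rewrite Tu0 E1 E2 -!EFinD -EFinM lee_fin.
have := q0 (X := X); lra.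
Qed.

Lemma P_le_g x xs : D xs -> Pf x xs <= Aop h x xs.
Proof.
move=> Dxs; apply: le_trans (P_le_Tu x xs 0%R _ dual_cst0) _.
have := gpi x xs Dxs; have := gCg x xs Dxs; have := Cgpi x xs Dxs.
case E1: (Aop h x xs) => [r| |]; last by move=> _ _; rewrite leeNy_eq.
2: by move=> *; rewrite leey.
case E2: (Cj (Aop h) x xs) => [c| |] //; rewrite !lee_fin => ? ? _.
have H := Tu0_le x xs r c E1 E2; apply: le_trans H _; rewrite lee_fin; lra.
Qed.

Definition mf := Cj (Cj Pf).

Lemma m_le_P x xs : D xs -> mf x xs <= Pf x xs.
Proof. exact: CjCj_le. Qed.

Lemma CP_le_P x xs : D xs -> Cj Pf x xs <= Pf x xs.
Proof. exact: addv_Cj_le _ P_pi P_add x xs. Qed.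

Lemma CP_le_m x xs : Cj Pf x xs <= mf x xs.
Proof. exact: Cj_antitone _ _ CP_le_P x xs. Qed.

Lemma Cm_le_m x xs : D xs -> Cj mf x xs <= mf x xs.
Proof. by move=> Dxs; apply: le_trans (CjCj_le (Cj Pf) x xs Dxs) (CP_le_m x xs). Qed.

Lemma m_pi : gepi mf.
Proof.
move=> x xs Dxs; apply: le_trans (Cgpi x xs Dxs) _.
apply: le_trans (CP_le_m x xs); apply: Cj_antitone => y ys Dys.
exact: P_le_g.
Qed.

Lemma m_addv : addv mf.
Proof. exact: Cj_le_addv _ m_pi Cm_le_m. Qed.

Lemma m_le_g x xs : D xs -> mf x xs <= Aop h x xs.
Proof. by move=> Dxs; apply: le_trans (m_le_P x xs Dxs) (P_le_g x xs Dxs). Qed.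

Lemma m_HT : HT T mf.
Proof.
split; first exact: Cj_lsc.
split; first exact: Cj_convex.
split; first exact: m_pi.
move=> x f Tx; have Df := Top _ _ Tx.
apply/eqP; rewrite eq_le m_pi // andbT.
by rewrite -(gT _ _ Tx) m_le_g.
Qed.
Lemma forward : max_additive_enl T (Tbreve h) ->
  forall x xs, D xs -> Cj (Aop h) x xs = Aop h x xs.
Proof.
move=> [_ [_ Hmax]].
have Hm := Hmax (Lg mf) (ex_intro _ mf (conj m_HT (fun _ _ _ => erefl)))
  (Lg_additive _ m_addv).
have {Hm} Hm : forall eps x, (0 <= eps)%R -> Tbreve h eps x = Lg mf eps x.
  apply: Hm => eps x e0; rewrite TbE => xs [Dxs H]; split => //.
  exact: le_trans (m_le_g x xs Dxs) H.
have g_le_m : forall x xs, D xs -> Aop h x xs <= mf x xs.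
  apply: Lg_sub_le; first exact: m_pi.
  by move=> e x e0; rewrite -Hm // TbE.
have K1 : forall x xs a as_, D xs -> D as_ -> Aop h x xs <= Tu x xs a as_.
  move=> x xs a as_ Dxs Das; apply: le_trans (g_le_m _ _ Dxs) _.
  apply: le_trans (m_le_P x xs Dxs) _; exact: P_le_Tu.
have StepA : forall x xs r, D xs -> Aop h x xs = r%:E -> Cj (Aop h) x xs = r%:E.
  move=> x xs r Dxs E1.
  have := gCg x xs Dxs; have := Cgpi x xs Dxs; rewrite E1.
  case E2: (Cj (Aop h) x xs) => [c| |] //; rewrite !lee_fin => _ cr.
  have := le_trans (K1 x xs 0%R _ Dxs dual_cst0) (Tu0_le x xs r c E1 E2).
  by rewrite E1 lee_fin => H; congr EFin; lra.
have StepB : forall x xs c, D xs -> Cj (Aop h) x xs = c%:E -> Aop h x xs != +oo.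
  move=> x xs c Dxs Ec.
  have [x0 [xs0 T0]] := T_nonempty T HM.
  have Dxs0 := Top _ _ T0.
  have gP := gT _ _ T0.
  have CgP : Cj (Aop h) x0 xs0 = (xs0 x0)%:E.
    apply/eqP; rewrite eq_le Cgpi // andbT -gP; exact: gCg.
  pose zx t := (t *: x + (1 - t) *: x0)%R.
  pose zf t := (fun u => t * xs u + (1 - t) * xs0 u)%R.
  have Dz : forall t, D (zf t) := fun t => @dual_comb _ _ xs xs0 t (1 - t) Dxs Dxs0.
  pose tn (n : nat) : R := (1 - (2^-1)^+n)%R.
  have tnS : forall n, tn n.+1 = ((1 + tn n) / 2)%R by move=> n; rewrite /tn exprS; lra.
  have fin : forall n, Aop h (zx (tn n)) (zf (tn n)) != +oo.
    elim => [|n IH].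
      have -> : tn 0%N = 0%R by rewrite /tn expr0 subrr.
      have -> : zx 0%R = x0 by rewrite /zx scale0r add0r subr0 scale1r.
      have -> : zf 0%R = xs0.
        by apply: funext => u; rewrite /zf mul0r add0r subr0 mul1r.
      by rewrite gP.
    rewrite tnS; move: IH; set t := tn n => IH.
    pose a := (((t - 1) / 2) *: x + ((1 - t) / 2) *: x0)%R.
    pose as_ := (fun u => (t - 1) / 2 * xs u + (1 - t) / 2 * xs0 u)%R.
    have Das : D as_ := @dual_comb _ _ xs xs0 _ _ Dxs Dxs0.
    have H := K1 (zx ((1 + t) / 2)%R) (zf ((1 + t) / 2)%R) a as_ (Dz _) Das.
    have E1 : (zx ((1 + t) / 2) + a = zx t)%R.
      rewrite /zx /a addrACA -(scalerDl x) -(scalerDl x0).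
      by congr (_ *: _ + _ *: _)%R; field.
    have E2 : (fun w => zf ((1 + t) / 2)%R w + as_ w)%R = zf t.
      by apply: funext => w; rewrite /zf /as_; field.
    have E3 : (zx ((1 + t) / 2) - a = x)%R.
      rewrite /zx /a opprD addrACA -(scaleNr _ x) -(scaleNr _ x0) -(scalerDl x) -(scalerDl x0).
      have -> : ((1 + t) / 2 + - ((t - 1) / 2) = 1)%R by field; done.
      have -> : (1 - (1 + t) / 2 + - ((1 - t) / 2) = 0)%R by field; done.
      by rewrite scale1r scale0r addr0.
    have E4 : (fun w => zf ((1 + t) / 2)%R w - as_ w)%R = xs.
      by apply: funext => w; rewrite /zf /as_; field.
    move: H; rewrite /Tu E1 E2 E3 E4 Ec => H.
    have := gpi (zx t) _ (Dz t); move: IH H.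
    case: (Aop h (zx t) (zf t)) => [r| |] //.
    move=> _ H _.
    rewrite -ltey; apply: le_lt_trans H _.
    by rewrite -!EFinD -EFinM ltry.
  have Bn : forall n, (0 < n)%N ->
      Aop h (zx (tn n)) (zf (tn n)) <= (tn n * c + (1 - tn n) * xs0 x0)%:E.
    move=> k k0; set tk := tn k.
    have s0 : (0 < (2^-1 : R)^+k)%R by rewrite exprn_gt0.
    have s1 : ((2^-1 : R)^+k < 1)%R.
      by rewrite exprn_ilt1 // ?invr_ge0 ?invf_lt1 ?ltr1n // -lt0n.
    have t0 : (0 < tk)%R by rewrite /tk /tn; lra.
    have t1 : (tk < 1)%R by rewrite /tk /tn; lra.
    have := fin k; have := gpi (zx tk) _ (Dz tk); rewrite -/tk.
    case E: (Aop h (zx tk) (zf tk)) => [r| |] // _ _.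
    rewrite -(StepA _ _ _ (Dz tk) E).
    apply: le_trans (Cj_convex (Aop h) x x0 xs xs0 tk Dxs Dxs0 t0 t1) _.
    by rewrite Ec CgP -!EFinM -EFinD.
  have Hle : Aop h x xs <= c%:E.
    apply: le_trans (g_le_m _ _ Dxs) _; apply: Cj_le => w ws Dws.
    have Hn : forall n, (0 < n)%N ->
        ((zf (tn n)) w + ws (zx (tn n)))%:E - Cj Pf w ws <=
        (tn n * c + (1 - tn n) * xs0 x0)%:E.
      move=> n n0; apply: le_trans (Bn n n0).
      apply: le_trans (m_le_g _ _ (Dz _)).
      exact: Cj_ge.
    move: Hn; case: (Cj Pf w ws) => [rho| |] => Hn.
    - rewrite -EFinB lee_fin.
      suff : (xs w + ws x - rho - c <= 0)%R by lra.
      apply: (@dyadic _ _ ((xs w + ws x - rho - c) - (xs0 w + ws x0 - rho - xs0 x0))).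
      move=> n n0; have := Hn n n0.
      rewrite -EFinB lee_fin /zf /zx /tn (dualD Dws) !(dualZ Dws) => H.
      set s := ((2^-1 : R)^+n)%R in H *.
      nra.
    - by rewrite addeNy leNye.
    - have := Hn 1%N isT; rewrite addey //.
  apply: contraTneq Hle => ->; by rewrite leye_eq.
move=> x xs Dxs.
have := gCg x xs Dxs; have := Cgpi x xs Dxs.
case Ec: (Cj (Aop h) x xs) => [c| |] //.
- move=> _ _; have := StepB x xs c Dxs Ec; have := gpi x xs Dxs.
  case Eg: (Aop h x xs) => [r| |] // _ _.
  by rewrite -Ec; exact: StepA.
- by move=> _; rewrite leye_eq => /eqP ->.
Qed.

Lemma all3 :
  additive_enl (Tbreve h) /\
  (max_additive_enl T (Tbreve h) <->
     (forall x xs, is_dual xs -> fconj (Aop h) xs x = Aop h x xs)) /\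
  ((forall x xs, is_dual xs -> fconj h xs x = h x xs) ->
     max_additive_enl T (Tbreve h)).
Proof.
split; first exact: Tbreve_additive.
split; first split.
- exact: forward.
- exact: backward.
- by move=> HC; apply: backward; apply: selfconj.
Qed.

End Main.

Theorem corollary3p5 (R : realType) (X : completeNormedModType R)
  (T : X -> set (X -> R)) (h : X -> (X -> R) -> \bar R) :
  reflexive_space X -> max_monotone_op T -> HT T h ->
  additive_enl (Tbreve h) /\
  (max_additive_enl T (Tbreve h) <->
     (forall x xs, is_dual xs -> fconj (Aop h) xs x = Aop h x xs)) /\
  ((forall x xs, is_dual xs -> fconj h xs x = h x xs) ->
     max_additive_enl T (Tbreve h)).
Proof.
move=> _ HM HH; exact: (@all3 R X T h HM HH).
Qed.
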